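(* Let $(X,\mathcal U)$ be a non-archimedean uniform space and $\mathcal B$ a base of $\mathcal U$ consisting of equivalence relations. Then: (1) realizing $A_{NA}(X,\mathcal U)$ on the free abelian group $A(X)$, and letting $\langle\varepsilon\rangle$ denote the subgroup of $A(X)$ generated by $\{x-y:(x,y)\in\varepsilon\}$, the family $\{\langle\varepsilon\rangle:\varepsilon\in\mathcal B\}$ is a base of neighborhoods of $0$ in $A_{NA}(X,\mathcal U)$; (2) realizing $B_{NA}(X,\mathcal U)$ on the free Boolean group $B(X)$, and letting $\langle\varepsilon\rangle$ denote the subgroup of $B(X)$ generated by $\{x-y:(x,y)\in\varepsilon\}$, the family $\{\langle\varepsilon\rangle:\varepsilon\in\mathcal B\}$ is a base of neighborhoods of $0$ in $B_{NA}(X,\mathcal U)$.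
   Context: A uniform space is non-archimedean if its uniformity has a base of equivalence relations. A topological group is non-archimedean if it has a local base at the identity of open subgroups; Boolean if every non-identity element has order 2. $A_{NA}(X,\mathcal U)$ (resp. $B_{NA}(X,\mathcal U)$) is the abelian (resp. Boolean) non-archimedean Hausdorff group with uniformly continuous $i\colon X\to G$ through which every uniformly continuous map into such a group factors uniquely by a continuous homomorphism; it is algebraically $A(X)$ (resp. $B(X)$) with $i$ the inclusion of generators. *)

(* Defs.v *)
From HB Require Import structures.
From mathcomp Require Import all_boot all_order all_algebra.
From mathcomp Require Import boolp classical_sets topology.
From mathcomp Require Import freeg.

Set Implicit Arguments.
Unset Strict Implicit.
Unset Printing Implicit Defensive.

Import GRing.Theory.
Local Open Scope classical_set_scope.
Local Open Scope ring_scope.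

Definition is_topology (T : Type) (tau : set (set T)) : Prop :=
  [/\ tau setT,
      (forall U V, tau U -> tau V -> tau (U `&` V)) &
      (forall (F : set (set T)), F `<=` tau -> tau (\bigcup_(U in F) U))].

Definition nbhd_of (T : Type) (tau : set (set T)) (a : T) (N : set T) : Prop :=
  exists2 U, tau U & (U a /\ U `<=` N).

Definition tcontinuous (T1 T2 : Type) (tau1 : set (set T1)) (tau2 : set (set T2))
  (f : T1 -> T2) : Prop :=
  forall V, tau2 V -> tau1 (f @^-1` V).

Definition hausdorff_top (T : Type) (tau : set (set T)) : Prop :=
  forall a b : T, a <> b ->
    exists U V, [/\ tau U, tau V, U a, V b & U `&` V = set0].

Definition is_subgroup (G : zmodType) (H : set G) : Prop :=
  H 0 /\ (forall a b, H a -> H b -> H (a - b)).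

Definition gen_subgroup (G : zmodType) (S : set G) : set G :=
  [set a | forall H : set G, is_subgroup H -> S `<=` H -> H a].

Definition group_topology (G : zmodType) (tau : set (set G)) : Prop :=
  is_topology tau /\
  (forall (a b : G) (W : set G), nbhd_of tau (a - b) W ->
     exists U V, [/\ nbhd_of tau a U, nbhd_of tau b V &
                    forall u v, U u -> V v -> W (u - v)]).

Definition non_archimedean_group (G : zmodType) (tau : set (set G)) : Prop :=
  forall W, nbhd_of tau 0 W ->
    exists2 H : set G, tau H /\ is_subgroup H & H `<=` W.

Definition NA_Hausdorff_group (G : zmodType) (tau : set (set G)) : Prop :=
  [/\ group_topology tau, hausdorff_top tau & non_archimedean_group tau].

Definition boolean_group (G : zmodType) : Prop := forall a : G, a + a = 0.

(** Uniform continuity of [f : X -> G] where [G] carries its group uniformity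
    (entourages {(a,b) | b - a \in W}, W neighborhood of 0). *)
Definition unif_cont_to_group (X : uniformType) (G : zmodType)
  (tau : set (set G)) (f : X -> G) : Prop :=
  forall W, nbhd_of tau 0 W ->
    exists2 E, entourage E & (forall x y, E (x, y) -> W (f y - f x)).

Definition additive_map (G1 G2 : zmodType) (phi : G1 -> G2) : Prop :=
  forall a b, phi (a - b) = phi a - phi b.

Definition freeAb (X : choiceType) := {freeg X / int}.
Definition freeBool (X : choiceType) := {freeg X / 'Z_2}.

Definition iA (X : choiceType) (x : X) : freeAb X := << x >>.
Definition iB (X : choiceType) (x : X) : freeBool X := << x >>.

(** Generic universal property: [tau] on [F] with generator map [i] makes
    (F, i) the free object of the class [C] of abelian NA Hausdorff groups
    (additionally restricted by the predicate [P] on groups). *)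
Definition free_NA_universal (X : uniformType) (F : zmodType) (i : X -> F)
  (tau : set (set F)) (P : zmodType -> Prop) : Prop :=
  [/\ P F, NA_Hausdorff_group tau, unif_cont_to_group tau i &
      forall (G : zmodType) (tauG : set (set G)),
        P G -> NA_Hausdorff_group tauG ->
        forall f : X -> G, unif_cont_to_group tauG f ->
          (exists phi : F -> G,
             [/\ additive_map phi, tcontinuous tau tauG phi & phi \o i = f]) /\
          (forall phi1 phi2 : F -> G,
             additive_map phi1 -> tcontinuous tau tauG phi1 -> phi1 \o i = f ->
             additive_map phi2 -> tcontinuous tau tauG phi2 -> phi2 \o i = f ->
             phi1 = phi2)].

Definition is_A_NA (X : uniformType) (tau : set (set (freeAb X))) : Prop :=
  free_NA_universal (@iA X) tau (fun _ => True).

Definition is_B_NA (X : uniformType) (tau : set (set (freeBool X))) : Prop :=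
  free_NA_universal (@iB X) tau boolean_group.

Definition equiv_rel (X : Type) (E : set (X * X)) : Prop :=
  [/\ (forall x, E (x, x)),
      (forall x y, E (x, y) -> E (y, x)) &
      (forall x y z, E (x, y) -> E (y, z) -> E (x, z))].

Definition equiv_base (X : uniformType) (B : set (set (X * X))) : Prop :=
  [/\ (forall E, B E -> entourage E),
      (forall E, B E -> equiv_rel E) &
      (forall E, entourage E -> exists2 D, B D & D `<=` E)].

Definition nbhd_base (T : Type) (tau : set (set T)) (a : T) (N : set (set T)) :=
  (forall V, N V -> nbhd_of tau a V) /\
  (forall W, nbhd_of tau a W -> exists2 V, N V & V `<=` W).

Definition genA (X : uniformType) (E : set (X * X)) : set (freeAb X) :=
  gen_subgroup [set iA p.1 - iA p.2 | p in E].
Definition genB (X : uniformType) (E : set (X * X)) : set (freeBool X) :=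
  gen_subgroup [set iB p.1 - iB p.2 | p in E].

(* Main.v *)
Require Import Defs.
From mathcomp Require Import all_boot all_order all_algebra.
From mathcomp Require Import boolp classical_sets topology.
From mathcomp Require Import freeg.
Local Open Scope classical_set_scope.
Local Open Scope ring_scope.
Import GRing.Theory.

Section Aux.

Lemma subgroup_add (G : zmodType) (H : set G) : is_subgroup H ->
  forall a b, H a -> H b -> H (a + b).
Proof.
move=> [H0 HB] a b Ha Hb.
have Hnb : H (- b) by rewrite -sub0r; exact: HB.
by rewrite -(opprK b); apply: HB.
Qed.

Lemma subgroup_muln (G : zmodType) (H : set G) : is_subgroup H ->
  forall a n, H a -> H (a *+ n).
Proof.
move=> sH a n Ha; elim: n => [|n IH]; first by rewrite mulr0n; case: sH.
by rewrite mulrS; apply: subgroup_add.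
Qed.

Lemma subgroup_mulz (G : zmodType) (H : set G) : is_subgroup H ->
  forall a (n : int), H a -> H (a *~ n).
Proof.
move=> sH a [n|n] Ha; first exact: subgroup_muln.
rewrite NegzE mulrNz -sub0r; case: (sH) => H0 HB; apply: HB => //.
by apply: subgroup_muln.
Qed.

Lemma gen_is_subgroup (G : zmodType) (S : set G) : is_subgroup (gen_subgroup S).
Proof.
split; first by move=> H [].
move=> a b Ha Hb H sH SH; case: (sH) => _ HB; apply: HB; [exact: Ha | exact: Hb].
Qed.

Lemma span_all (R : nzRingType) (X : choiceType) (H : set {freeg X / R}) :
  is_subgroup H -> (forall k x, H << k *g x >>) -> forall D, H D.
Proof.
move=> sH Hk D; rewrite -(freeg_sumE D).
apply: (big_ind H); first by case: sH.
  exact: subgroup_add.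
by move=> i _; apply: Hk.
Qed.

Lemma spanA (X : choiceType) (H : set {freeg X / int}) :
  is_subgroup H -> (forall x, H << x >>) -> forall D, H D.
Proof.
move=> sH Hx; apply: span_all => // k x.
have -> : k = k%:~R by rewrite intz.
rewrite -freegU_mulz; exact: subgroup_mulz.
Qed.

Lemma spanB (X : choiceType) (H : set {freeg X / 'Z_2}) :
  is_subgroup H -> (forall x, H << x >>) -> forall D, H D.
Proof.
move=> sH Hx; apply: span_all => // k x.
have -> : k = (nat_of_ord k)%:R by rewrite natr_Zp.
rewrite -freegU_muln; exact: subgroup_muln.
Qed.

Lemma discrete_NA (G : zmodType) : NA_Hausdorff_group (setT : set (set G)).
Proof.
split.
- split; first by split.
  move=> a b W [U _ [Uab UW]].
  exists [set a], [set b]; split.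
  + by exists [set a] => //; split.
  + by exists [set b] => //; split.
  + by move=> u v -> ->; apply: UW.
- move=> a b ab; exists [set a], [set b]; split => //.
  by apply/seteqP; split => x //= [xa xb]; apply: ab; rewrite -xa -xb.
- move=> W [U _ [U0 UW]]; exists [set 0].
    split => //; split => // a b -> ->; by rewrite subrr.
  by move=> x /= ->; apply: UW.
Qed.

Lemma main (R : nzRingType) (X : uniformType) (B : set (set (X * X)))
  (P : zmodType -> Prop) (tau : set (set {freeg X / R})) :
  (forall H : set {freeg X / R}, is_subgroup H -> (forall x, H << x >>) -> forall D, H D) ->
  equiv_base B ->
  free_NA_universal (fun x : X => << x >> : {freeg X / R}) tau P ->
  nbhd_base tau 0
    [set gen_subgroup [set (<< p.1 >> : {freeg X / R}) - << p.2 >> | p in E] | E in B].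
Proof.
move=> span [Bent Beq Bbase] [PF [GT HT NA] ui univ]; split.
- move=> _ [E BE <-].
  have [Erefl Esym Etr] := Beq E BE.
  pose exE (x : X) : exists z, `[< E (x, z) >] := ex_intro _ x (asboolT (Erefl x)).
  pose r x := xchoose (exE x).
  have Er x : E (x, r x) by move: (xchooseP (exE x)) => /asboolP.
  have rE x y : E (x, y) -> r x = r y.
    move=> Exy; apply: eq_xchoose => z /=; apply/asboolP/asboolP.
      by move=> Exz; apply: Etr (Esym _ _ Exy) Exz.
    by move=> Eyz; apply: Etr Exy Eyz.
  pose f x : {freeg X / R} := << r x >>.
  have uf : unif_cont_to_group (setT : set (set {freeg X / R})) f.
    move=> W [U _ [U0 UW]]; exists E; first exact: Bent.
    by move=> x y Exy; rewrite /f (rE _ _ Exy) subrr; apply: UW.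
  have [[phi [addphi contphi phiE]] _] := univ _ _ PF (discrete_NA _) f uf.
  have phi0 : phi 0 = 0 by have := addphi 0 0; rewrite !subrr.
  exists (phi @^-1` [set 0]); first exact: contphi.
  split => //= w phiw.
  set S := gen_subgroup _.
  have sS : is_subgroup S := gen_is_subgroup _ _.
  pose T := [set w | S (w - phi w)].
  have sT : is_subgroup T.
    split; first by rewrite /T /= phi0 subrr; case: sS.
    move=> a b Ta Tb; rewrite /T /= addphi.
    have -> : a - b - (phi a - phi b) = (a - phi a) - (b - phi b).
      by rewrite !opprB addrACA [RHS]addrACA [- b + _]addrC.
    by case: sS => _ HB; apply: HB.
  have Tx x : T << x >>.
    rewrite /T /=.
    have -> : phi << x >> = f x by rewrite -phiE.
    move=> H sH SH; apply: SH; exists (x, r x) => //; exact: Er.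
  have := span T sT Tx w; rewrite /T /= phiw subr0; exact.
- move=> W nW.
  have [H [tH sH] HW] := NA W nW.
  have nH : nbhd_of tau 0 H by exists H => //; split => //; case: sH.
  have [D entD Di] := ui H nH.
  have [E BE ED] := Bbase D entD.
  exists (gen_subgroup [set (<< p.1 >> : {freeg X / R}) - << p.2 >> | p in E]).
    by exists E.
  move=> w gw; apply: HW; apply: gw => //.
  move=> _ [[x y] Exy <-] /=.
  have [_ Esym _] := Beq E BE.
  exact: Di (ED _ (Esym _ _ Exy)).
Qed.

End Aux.

Theorem theorem4p14 (X : uniformType) (B : set (set (X * X))) :
  equiv_base B ->
  (forall tau : set (set (freeAb X)), is_A_NA tau ->
     nbhd_base tau 0 [set genA E | E in B]) /\
  (forall tau : set (set (freeBool X)), is_B_NA tau ->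
     nbhd_base tau 0 [set genB E | E in B]).
Proof.
move=> hB; split => tau htau.
- exact: (@main int X B _ tau (@spanA X) hB htau).
- exact: (@main _ X B _ tau (@spanB X) hB htau).
Qed.
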